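(* Let $k\ge2$ and $n\ge1$, and let $h_k(x_1,\dots,x_n)=\sum_{|J|=k}x^J$ be the complete homogeneous symmetric polynomial of degree $k$. Then the polynomials $\partial h_k/\partial x_i$, $i=1,\dots,n$, have no common zero in $\mathbb{C}^n\setminus\{0\}$. *)

(* Defs.v *)
From HB Require Import structures.
From mathcomp Require Import all_boot all_algebra.
From mathcomp Require Import Rstruct complex.
From mathcomp Require Import mpoly.

Set Implicit Arguments.
Unset Strict Implicit.
Unset Printing Implicit Defensive.

Import GRing.Theory.
Local Open Scope ring_scope.

Definition Cplx : numClosedFieldType := (Rdefinitions.R)[i].

Definition hsym (R : comRingType) (n k : nat) : {mpoly R[n]} :=
  \sum_(m : 'X_{1..n < k.+1} | mdeg m == k) 'X_[m].

(* Main.v *)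
Require Import Defs.
From HB Require Import structures.
From mathcomp Require Import all_boot all_algebra.
From mathcomp Require Import Rstruct complex.
From mathcomp Require Import mpoly.
Set Implicit Arguments.
Unset Strict Implicit.
Import GRing.Theory Num.Theory.
Local Open Scope ring_scope.

Section H.
Variables (R : comRingType) (n : nat).

Lemma hsym_coef m (a : 'X_{1..n}) : (hsym R n m)@_a = (mdeg a == m)%:R.
Proof.
rewrite /hsym raddf_sum /=.
under eq_bigr do rewrite mcoeffX.
case: (eqVneq (mdeg a) m) => Ha.
- have Hb : (mdeg a < m.+1)%N by rewrite Ha.
  rewrite (bigD1 (BMultinom Hb)) /= ?Ha ?eqxx // big1 ?addr0 //.
  move=> j /andP [_ Hj]; case: eqP => // E; case/eqP: Hj.
  by apply: val_inj.
- apply: big1 => j /eqP Hj; case: eqP => // E.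
  by case/eqP: Ha; rewrite -E.
Qed.

Lemma dhsym_coef i m (a : 'X_{1..n}) :
  (mderiv i (hsym R n m))@_a = ((mdeg a).+1 == m)%:R *+ (a i).+1.
Proof. by rewrite mcoeff_deriv hsym_coef mdegD mdeg1 addn1. Qed.

Lemma hsymE2 i m :
  mderiv i (hsym R n m.+1) = hsym R n m + mderiv i (hsym R n m) * 'X_i.
Proof.
apply/mpolyP => a; rewrite mcoeffD dhsym_coef hsym_coef.
rewrite eqSS.
case: (posnP (a i)) => Hai.
- rewrite Hai.
  have -> : (mderiv i (hsym R n m) * 'X_i)@_a = 0.
    apply/eqP; apply: contraT; rewrite -mcoeff_msupp.
    rewrite (perm_mem (msuppMX _ _)) => /mapP [m' _ Em].
    by move: Hai; rewrite Em mnmDE mnm1E eqxx.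
  by rewrite addr0.
- have Hle : (U_(i) <= a)%MM.
    apply/mnm_lepP => j; rewrite mnm1E; case: eqP => [<-|] //.
  have Ea : a = (U_(i) + (a - U_(i)))%MM by rewrite addmC submK.
  rewrite [X in mcoeff X _]Ea mcoeffMX dhsym_coef.
  have -> : (mdeg (a - U_(i))).+1 = mdeg a.
    by rewrite -addn1 -(mdeg1 i) -(mdegD) submK.
  rewrite mnmBE mnm1E eqxx subn1 prednK // -mulrS. done.
Qed.

Lemma hsymS m :
  \sum_(i < n) mderiv i (hsym R n m.+1) = hsym R n m *+ (n + m).
Proof.
apply/mpolyP => a; rewrite raddf_sum mcoeffMn hsym_coef /=.
under eq_bigr do rewrite dhsym_coef eqSS.
rewrite sumrMnr; case: eqP => E; last by rewrite !mul0rn.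
congr (_ *+ _); rewrite -E mdegE -[n in (n + _)%N]card_ord -sum1_card.
by rewrite -big_split /=; apply: eq_bigr => j _; rewrite add1n.
Qed.

Lemma hsym0 : hsym R n 0 = 1.
Proof. by apply/mpolyP => a; rewrite hsym_coef mcoeff1 mdeg_eq0. Qed.
End H.

Theorem lemma15 (k n : nat) (hk : (2 <= k)%N) (hn : (1 <= n)%N)
  (x : 'I_n -> Cplx) :
  (forall i : 'I_n, (mderiv i (hsym Cplx n k)).@[x] = 0) ->
  forall i : 'I_n, x i = 0.
Proof.
move=> Hk i0; apply/eqP; apply: contraT => Hx0.
pose h m := (hsym Cplx n m).@[x].
pose D i m := (mderiv i (hsym Cplx n m)).@[x].
have E2 i m : D i m.+1 = h m + D i m * x i.
  by rewrite /D hsymE2 mevalD mevalM mevalXU.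
have S m : \sum_(i < n) D i m.+1 = h m *+ (n + m).
  by rewrite /D -raddf_sum /= hsymS mevalMn.
have H0 : h 0 = 1 by rewrite /h hsym0 meval1.
pose Q m := forall i, D i m.+1 = 0.
have Qh m : Q m -> h m = 0.
  move=> Qm; have := S m; rewrite big1 // => /esym/eqP.
  rewrite mulrn_eq0 => /orP [|/eqP //].
  by rewrite addn_eq0 => /andP [/eqP Hn]; move: hn; rewrite Hn.
pose z := #|[pred i | x i == 0]|.
have zlt : (z < n)%N.
  rewrite -[n in (_ < n)%N]card_ord; apply: proper_card.
  apply/properP; split; first by apply/subsetP.
  by exists i0 => //; rewrite inE.
have step m : Q m.+1 -> Q m.
  move=> Qm1.
  have hm1 := Qh _ Qm1.
  have Dnz i : x i != 0 -> D i m.+1 = 0.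
    move=> Hxi; have := Qm1 i; rewrite E2 hm1 add0r => /eqP.
    by rewrite mulf_eq0 (negbTE Hxi) orbF => /eqP.
  have Dz i : x i = 0 -> D i m.+1 = h m.
    by move=> Hxi; rewrite E2 Hxi mulr0 addr0.
  have Sz : \sum_(i < n) D i m.+1 = h m *+ z.
    rewrite (bigID (fun i => x i == 0)) /= [X in _ + X]big1; last first.
      by move=> i Hi; apply: Dnz.
    rewrite addr0 (eq_bigr (fun _ => h m)); last by move=> i /eqP; apply: Dz.
    by rewrite sumr_const.
  have hm0 : h m = 0.
    have := S m; rewrite Sz => Heq.
    have : h m *+ (n + m - z) = 0.
      by rewrite mulrnBr ?Heq ?subrr // (leq_trans (ltnW zlt)) // leq_addr.
    move/eqP; rewrite mulrn_eq0 => /orP [|/eqP //].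
    by rewrite subn_eq0 => Hle; move: (leq_trans (leq_trans zlt (leq_addr m n)) Hle); rewrite ltnn.
  move=> i; case: (eqVneq (x i) 0) => Hxi; first by rewrite Dz.
  exact: Dnz.
have QQ d m : (m + d = k.-1)%N -> Q m.
  elim: d m => [|d IH] m.
    rewrite addn0 => ->; move=> i; rewrite prednK ?(leq_trans _ hk) //.
    exact: Hk.
  by move=> Hmd; apply: step; apply: IH; rewrite addSnnS.
have := Qh 0 (QQ k.-1 0 (add0n _)); rewrite H0 => /eqP.
by rewrite oner_eq0.
Qed.
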